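(* Let $\mathcal{O}$ be a field, $2\le m\le n$, $t = m-1$, $P = \mathcal{O}[X_{m\times n}]$, $I = \mathrm{I}_m(X)$, $J = (f_1,\ldots,f_{n-t})$ with $f_i = \det X_{[i,i+t]}$, and $\mathfrak{Q}_i = \mathrm{I}_t(X_{[i,i+t-1]})$. Then, as ideals of $P$, $$\mathfrak{Q}_2\mathfrak{Q}_3\cdots\mathfrak{Q}_{n-t} \subseteq (J :_P I),$$ i.e. $\mathfrak{Q}_2\cdots\mathfrak{Q}_{n-t}\, I \subseteq J$.
   Context: $P$ is the polynomial ring over $\mathcal{O}$ in the entries of an $m\times n$ matrix of indeterminates $X$; $\mathrm{I}_k(Y)$ is the ideal of $k\times k$ minors of $Y$; $X_{[a,b]}$ is the submatrix of $X$ consisting of columns $a$ through $b$ inclusive. An empty product of ideals is $P$. *)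

(* Defs.v *)
From HB Require Import structures.
From mathcomp Require Import all_boot all_order all_algebra.
From mathcomp Require Import mpoly.
Set Implicit Arguments. Unset Strict Implicit. Unset Printing Implicit Defensive.
Import GRing.Theory.
Local Open Scope ring_scope.

Definition ideal_gen (R : comNzRingType) (S : R -> Prop) : R -> Prop :=
  fun p => exists (k : nat) (g c : 'I_k -> R),
    (forall i, S (g i)) /\ p = \sum_(i < k) c i * g i.

Definition idealM (R : comNzRingType) (A B : R -> Prop) : R -> Prop :=
  ideal_gen (fun x => exists a b, [/\ A a, B b & x = a * b]).

Definition idealT (R : comNzRingType) : R -> Prop := fun _ => True.

Definition ideal_prod (R : comNzRingType) (s : seq (R -> Prop)) : R -> Prop :=
  foldr (@idealM R) (@idealT R) s.

Definition ideal_colon (R : comNzRingType) (J I : R -> Prop) : R -> Prop :=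
  fun p => forall x, I x -> J (p * x).

Definition minors (R : comNzRingType) (p q k : nat) (Y : 'M[R]_(p, q)) : R -> Prop :=
  fun d => exists (f : 'I_k -> 'I_p) (g : 'I_k -> 'I_q),
    [/\ forall a b : 'I_k, (a < b)%N -> (f a < f b)%N,
        forall a b : 'I_k, (a < b)%N -> (g a < g b)%N
      & d = \det (mxsub f g Y)].

Definition minor_ideal (R : comNzRingType) (p q k : nat) (Y : 'M[R]_(p, q)) : R -> Prop :=
  ideal_gen (minors k Y).

Definition indetmx (F : fieldType) (m n : nat) : 'M[{mpoly F[m * n]}]_(m, n) :=
  \matrix_(i < m, j < n) 'X_(mxvec_index i j).

(* Column c (0-indexed, as a nat) of X, or zero if out of range. *)
Definition colnat (R : comNzRingType) (m n : nat) (X : 'M[R]_(m, n)) (c : nat) : 'cV[R]_m :=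
  if @insub _ (fun x => (x < n)%N) 'I_n c is Some c' then col c' X else 0.

(* colblock X a k = X_{[a, a+k-1]}: the submatrix of the k consecutive columns
   a, a+1, ..., a+k-1 of X, columns being numbered from 1. *)
Definition colblock (R : comNzRingType) (m n : nat) (X : 'M[R]_(m, n)) (a k : nat) : 'M[R]_(m, k) :=
  \matrix_(i < m, j < k) colnat X (a.-1 + j) i ord0.

(* Main.v *)
Require Import Defs.
From HB Require Import structures.
From mathcomp Require Import all_boot all_order all_algebra.
From mathcomp Require Import mpoly.
From mathcomp Require Import zify.
Set Implicit Arguments. Unset Strict Implicit. Unset Printing Implicit Defensive.
Import GRing.Theory.
Local Open Scope ring_scope.

From mathcomp Require fingroup perm.
Section Ideals.
Variable R : comNzRingType.
Implicit Types S T U : R -> Prop.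

Lemma gen_in S p : S p -> ideal_gen S p.
Proof.
move=> Sp; exists 1%N, (fun _ => p), (fun _ => 1); split => //.
by rewrite big_ord1 mul1r.
Qed.

Lemma gen0 S : ideal_gen S 0.
Proof. by exists 0%N, (fun _ => 0), (fun _ => 0); split => [[]//|]; rewrite big_ord0. Qed.

Lemma genD S p q : ideal_gen S p -> ideal_gen S q -> ideal_gen S (p + q).
Proof.
move=> [k1 [g1 [c1 [H1 ->]]]] [k2 [g2 [c2 [H2 ->]]]].
exists (k1 + k2)%N, (fun i => match split i with inl a => g1 a | inr b => g2 b end),
  (fun i => match split i with inl a => c1 a | inr b => c2 b end); split.
  by move=> i; case: split.
have e1 : forall i : 'I_k1, split (lshift k2 i) = inl i by move=> i; exact: (@unsplitK k1 k2 (inl i)).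
have e2 : forall i : 'I_k2, split (rshift k1 i) = inr i by move=> i; exact: (@unsplitK k1 k2 (inr i)).
by rewrite big_split_ord /=; congr (_ + _); apply: eq_bigr => i _;
  rewrite ?e1 ?e2.
Qed.

Lemma genM S r p : ideal_gen S p -> ideal_gen S (r * p).
Proof.
move=> [k [g [c [H ->]]]]; exists k, g, (fun i => r * c i); split => //.
by rewrite big_distrr /=; apply: eq_bigr => i _; rewrite mulrA.
Qed.

Lemma gen_sum S k (F : 'I_k -> R) : (forall i, ideal_gen S (F i)) -> ideal_gen S (\sum_(i < k) F i).
Proof.
elim: k F => [|k IH] F H; first by rewrite big_ord0; apply: gen0.
by rewrite big_ord_recr /=; apply: genD => //; apply: IH.
Qed.

Lemma gen_mulr S U p x : ideal_gen S p -> (forall s, S s -> ideal_gen U (s * x)) ->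
  ideal_gen U (p * x).
Proof.
move=> [k [g [c [H ->]]]] Hs; rewrite big_distrl /=; apply: gen_sum => i.
by rewrite -mulrA; apply: genM; apply: Hs.
Qed.

Lemma gen_mul S T U a b : (forall s t, S s -> T t -> ideal_gen U (s * t)) ->
  ideal_gen S a -> ideal_gen T b -> ideal_gen U (a * b).
Proof.
move=> H Ha Hb; apply: gen_mulr Ha _ => s Ss; rewrite mulrC.
by apply: gen_mulr Hb _ => u Tu; rewrite mulrC; apply: H.
Qed.

Lemma gen_mono S U a : (forall s, S s -> ideal_gen U s) -> ideal_gen S a -> ideal_gen U a.
Proof.
move=> H Ha; rewrite -[X in ideal_gen U X]mulr1.
by apply: gen_mulr Ha _ => s Ss; rewrite mulr1; apply: H.
Qed.

End Ideals.

Section Incr.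
Lemma incr_ge k N (f : 'I_k -> 'I_N) : (forall a b : 'I_k, (a < b)%N -> (f a < f b)%N) ->
  forall a : 'I_k, (a <= f a)%N.
Proof.
move=> H a; suff: forall n (a : 'I_k), nat_of_ord a = n -> (n <= f a)%N by move=> /(_ a a erefl).
elim=> [//|n IH] a' ea.
have ltn : (n < k)%N by have := ltn_ord a'; lia.
have := IH (Ordinal ltn) erefl; have := H (Ordinal ltn) a'.
rewrite /= ea ltnSn => /(_ isT); lia.
Qed.

Lemma incr_le k N (f : 'I_k -> 'I_N) : (forall a b : 'I_k, (a < b)%N -> (f a < f b)%N) ->
  forall a : 'I_k, (f a + (k - a.+1) < N)%N.
Proof.
move=> H; suff: forall d (a : 'I_k), (a + d < k)%N -> (f a + d < N)%N.
  by move=> Hd a; apply: Hd; have := ltn_ord a; lia.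
elim=> [|d IH] a Ha; first by rewrite addn0.
have lt1 : (a.+1 < k)%N by lia.
have := IH (Ordinal lt1) ltac:(rewrite /=; lia); have := H a (Ordinal lt1) (ltnSn _).
rewrite /=; lia.
Qed.

Lemma incr_id k N (f : 'I_k -> 'I_N) : (N <= k)%N -> (forall a b : 'I_k, (a < b)%N -> (f a < f b)%N) ->
  forall a : 'I_k, (f a : nat) = a.
Proof.
move=> Hk H a; have := incr_ge H a; have := incr_le H a; have := ltn_ord a; lia.
Qed.

Lemma incr_lift k (f : 'I_k -> 'I_k.+1) : (forall a b : 'I_k, (a < b)%N -> (f a < f b)%N) ->
  exists r : 'I_k.+1, forall a, f a = lift r a.
Proof.
move=> H.
have [r rN] : exists r, r \notin codom f.
  apply/existsP; rewrite -negb_forall; apply/negP => /forallP Hall.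
  have : (#|'I_k.+1| <= #|codom f|)%N.
    by apply: subset_leq_card; apply/subsetP => y _; apply: Hall.
  move=> h; have h2 := card_size (codom f); rewrite size_codom card_ord in h2.
  rewrite card_ord in h; have := leq_trans h h2; by rewrite ltnn.
have ne : forall a, r != f a by move=> a; apply: contra rN => /eqP ->; apply: codom_f.
pose s a := sval (unlift_some (ne a)).
have Es : forall a, f a = lift r (s a) by move=> a; rewrite /s; case: unlift_some.
have Hs : forall a b : 'I_k, (a < b)%N -> (s a < s b)%N.
  move=> a b /H; rewrite !Es /= /bump.
  move: (s a) (s b) => x y.
  case: (leqP r x) => h1; case: (leqP r y) => h2 /=; rewrite ?add0n ?add1n.
  - by rewrite ltnS.
  - by move=> h; apply: ltn_trans (ltnSn x) h.
  - by move=> _; exact: leq_trans h1 h2.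
  - by [].
exists r => a; rewrite Es; congr lift; apply: val_inj; exact: incr_id Hs a.
Qed.
End Incr.
Section Mat.
Variable R : comNzRingType.
Variables t n : nat.
Variable X : 'M[R]_(t.+1, n).

Definition Mc (s : 'I_t.+1 -> nat) : 'M[R]_t.+1 := \matrix_(i, j) colnat X (s j) i ord0.
Definition Mb b v := Mc (fun j => if j == ord_max then v else (b + j)%N).
Definition Jg p := exists2 i : nat, (1 <= i <= n - t)%N & p = \det (colblock X i t.+1).
Definition Gb b p := Jg p \/ exists2 c, (c < b)%N & p = \det (Mb b c).

Lemma cramer (M C : 'M[R]_t.+1) j0 r : cofactor M r j0 * \det C =
  \sum_j \det (\matrix_(i, l) if l == j0 then C i j else M i l) * \adj C j r.
Proof.
pose u : 'rV[R]_t.+1 := \row_i cofactor M i j0.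
have Ew : forall j, \det (\matrix_(i, l) if l == j0 then C i j else M i l) = (u *m C) 0 j.
  move=> j; rewrite (expand_det_col _ j0) mxE; apply: eq_bigr => i _.
  rewrite !mxE eqxx mulrC; congr (_ * _); rewrite /cofactor; congr (_ * _); congr (\det _).
  by apply/matrixP => a b; rewrite !mxE lift_eqF.
have : (u *m C *m \adj C) 0 r = (u *m (\det C)%:M) 0 r by rewrite -mulmxA mul_mx_adj.
rewrite mul_mx_scalar [in RHS]mxE [in RHS]mxE mulrC => <-.
by rewrite mxE; apply: eq_bigr => j _; rewrite Ew.
Qed.

Lemma Mc_repl s s' j j0 :
  (\matrix_(i, l) if l == j0 then Mc s' i j else Mc s i l) =
  Mc (fun l => if l == j0 then s' j else s l).
Proof. by apply/matrixP => a b; rewrite !mxE; case: (b == j0); rewrite ?mxE. Qed.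

Lemma det_Mc_eq s (j1 j2 : 'I_t.+1) : j1 != j2 -> s j1 = s j2 -> \det (Mc s) = 0.
Proof.
move=> ne e; rewrite -det_tr; apply: (determinant_alternate ne) => i.
by rewrite !mxE e.
Qed.

Lemma classify b v : (b < n - t)%N -> (v <= b + t)%N -> ideal_gen (Gb b) (\det (Mb b v)).
Proof.
move=> hb hv; case: (ltnP v b) => h1.
  by apply: gen_in; right; exists v.
case: (ltnP v (b + t)) => h2.
  have hl : (v - b < t.+1)%N by lia.
  have hne : (ord_max : 'I_t.+1) != Ordinal hl.
    by rewrite -val_eqE /= neq_ltn; apply/orP; right; lia.
  rewrite (det_Mc_eq hne); first exact: gen0.
  have -> : (Ordinal hl == ord_max) = false by apply/negbTE; rewrite eq_sym.
  rewrite eqxx /=; lia.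
have -> : v = (b + t)%N by lia.
apply: gen_in; left; exists b.+1; first by lia.
congr (\det _); apply/matrixP => i j; rewrite !mxE.
case: eqP => [->|//] /=; by [].
Qed.

Lemma Q_gen b q : minors t (colblock X b.+1 t) q ->
  exists r : 'I_t.+1, forall v, cofactor (Mb b v) r ord_max = (-1) ^+ (r + (ord_max : 'I_t.+1))%N * q.
Proof.
move=> [f [g [hf hg ->]]].
have [r Er] := incr_lift hf.
have Eg := incr_id (leqnn t) hg.
exists r => v; rewrite /cofactor; congr (_ * _); congr (\det _).
apply/matrixP => i j; rewrite !mxE lift_eqF Er Eg lift_max /=.
by [].
Qed.

Lemma cramer_Mb b q s : (b < n - t)%N -> minors t (colblock X b.+1 t) q ->
  (forall j, (s j <= b + t)%N) -> ideal_gen (Gb b) (q * \det (Mc s)).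
Proof.
move=> hb hq hs; have [r Er] := Q_gen hq.
have -> : q = (-1) ^+ (r + (ord_max : 'I_t.+1))%N * cofactor (Mb b 0) r ord_max.
  by rewrite Er mulrA -exprD -signr_odd oddD addbb expr0 mul1r.
rewrite -mulrA cramer; apply: genM; apply: gen_sum => j.
rewrite mulrC; apply: genM; rewrite /Mb Mc_repl.
have -> : \det (Mc (fun l => if l == ord_max then s j else if l == ord_max then 0%N else (b + l)%N)) =
  \det (Mb b (s j)).
  by congr (\det _); apply/matrixP => a l; rewrite !mxE; case: (l == ord_max).
exact: classify.
Qed.

Lemma ltn_notmax (j : 'I_t.+1) : j != ord_max -> (j < t)%N.
Proof.
move=> hj; have := ltn_ord j; rewrite ltnS leq_eqVlt => /orP [/eqP e|//].
by case/eqP: hj; apply: val_inj.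
Qed.

Lemma step b q y : (b.+1 < n - t)%N -> minors t (colblock X b.+1 t) q ->
  ideal_gen (Gb b.+1) y -> ideal_gen (Gb b) (q * y).
Proof.
move=> hb hq hy; apply: (gen_mul (S := minors t (colblock X b.+1 t)) _ (gen_in hq) hy).
move=> q' y0 hq' [hJ|[c hc ->]].
  by apply: genM; apply: gen_in; left.
apply: cramer_Mb => //; first lia.
move=> j; case: eqP => [_|/eqP hj]; first lia.
by have := ltn_notmax hj; lia.
Qed.

Lemma Mc_sub (f : 'I_t.+1 -> 'I_t.+1) (g : 'I_t.+1 -> 'I_n) :
  (forall i, f i = i) -> mxsub f g X = Mc (fun j => g j).
Proof.
move=> Ef; apply/matrixP => i j; rewrite !mxE /colnat valK Ef.
by rewrite mxE.
Qed.

Lemma base b q x : (b.+1 = n - t)%N -> minors t (colblock X b.+1 t) q ->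
  minors t.+1 X x -> ideal_gen (Gb b) (q * x).
Proof.
move=> hb hq [f [g [hf hg ->]]].
have Ef : forall i, f i = i by move=> i; apply: val_inj; exact: incr_id (leqnn _) hf i.
rewrite Mc_sub //; apply: cramer_Mb => //; first lia.
by move=> j; have := ltn_ord (g j); lia.
Qed.

Definition Qi (i : nat) := minor_ideal t (colblock X i t).

Lemma main_gen len b : (b + len.+1 = n - t)%N ->
  forall p, ideal_prod [seq Qi i | i <- iota b.+1 len.+1] p ->
  forall x, minor_ideal t.+1 X x -> ideal_gen (Gb b) (p * x).
Proof.
elim: len b => [|len IH] b hb p hp x hx.
  apply: gen_mulr hp _ => s [a [c [ha _ ->]]].
  rewrite mulrAC mulrC; apply: genM.
  apply: (gen_mul (S := minors t (colblock X b.+1 t)) (T := minors t.+1 X) _ ha hx).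
  move=> q y hq hy; apply: base => //; lia.
apply: gen_mulr hp _ => s [a [c [ha hc ->]]].
rewrite -mulrA.
have hcx := IH b.+1 ltac:(lia) c hc x hx.
apply: (gen_mul (S := minors t (colblock X b.+1 t)) (T := Gb b.+1) _ ha hcx).
move=> q y hq hy; apply: step => //; [lia | exact: gen_in].
Qed.

Lemma final p : (1 <= n - t)%N -> ideal_gen (Gb 1) p -> ideal_gen Jg p.
Proof.
move=> hn; apply: gen_mono => s [hJ|[c hc ->]]; first exact: gen_in.
have -> : c = 0%N by lia.
have -> : Mb 1 0 = col_perm (perm.perm (@ordS_inj t.+1)) (colblock X 1 t.+1).
  apply/matrixP => i j; rewrite !mxE perm.permE /=.
  congr (colnat X _ i ord0).
  case: eqP => [->|/eqP hj] /=; first by rewrite modnn.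
  rewrite modn_small //; have := ltn_ord j; have : (j : nat) != t.
    by apply: contra hj => /eqP hj; apply/eqP; apply: val_inj.
  lia.
rewrite col_permE det_mulmx det_perm mulrC; apply: genM; apply: gen_in.
by exists 1%N.
Qed.
End Mat.
Theorem proposition4p3 (F : fieldType) (m n : nat) (hm : (2 <= m)%N) (hmn : (m <= n)%N) :
  let t := m.-1 in
  let X := @indetmx F m n in
  let I := minor_ideal m X in
  (* f_i = det X_{[i, i+t]} ; note i+t-i+1 = m columns *)
  let J := ideal_gen (fun p => exists2 i : nat, (1 <= i <= n - t)%N & p = \det (colblock X i m)) in
  (* Q_i = I_t(X_{[i, i+t-1]}) *)
  let Q := fun i : nat => minor_ideal t (colblock X i t) in
  forall p, ideal_prod [seq Q i | i <- iota 2 (n - t - 1)] p -> ideal_colon J I p.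
Proof.
case: m hm hmn => [|t] // hm hmn; cbv zeta => /= p hp x hx.
set X := indetmx F t.+1 n in hp hx *.
case: (ltnP 1 (n - t)) => hn.
  have [len hlen] : exists len, (n - t - 1 = len.+1)%N by exists (n - t - 2)%N; lia.
  rewrite hlen in hp.
  apply: (final (X := X)); first lia.
  exact: (main_gen (X := X) (b := 1) (len := len) ltac:(lia) hp hx).
have hn1 : (n - t - 1 = 0)%N by lia.
apply: genM.
apply: (gen_mono _ hx) => s [f [g [hf hg ->]]].
apply: gen_in; exists 1%N; first lia.
congr (\det _); apply/matrixP => i j; rewrite !mxE /colnat.
have Ef : f i = i by apply: val_inj; exact: incr_id (leqnn _) hf i.
have Eg : (g j : nat) = j by apply: incr_id hg j; lia.
rewrite /= Ef; case: insubP => [c _ Ec|]; last first.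
  by rewrite add0n; have := ltn_ord j; lia.
rewrite !mxE; congr 'X_(mxvec_index i _); apply: val_inj; rewrite /= Ec add0n; exact: Eg.
Qed.
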